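(* Let $k\in[0,1)$, $k'=\sqrt{1-k^2}$ and $k^*=ik/k'$ (so $(k^* )^2=-k^2/(1-k^2)\le0$ and ${k^*}'=\sqrt{1-(k^* )^2}=1/k'$). Then for every $\bar\theta\in(0,\pi/2)$, $$\sinh\big(2J(\bar\theta|k)\big)\,\sinh\Big(2J\Big(\frac\pi2-\bar\theta\,\Big|\,k^*\Big)\Big)=1.$$ Consequently the high-temperature expansion of the $Z$-invariant Ising model on an isoradial graph $G$ with modulus $k$ and the low-temperature expansion of the $Z$-invariant Ising model on the dual isoradial graph $G^*$ with modulus $k^*$ induce the same measure on polygon configurations of $G$.
   Context: $J(\bar\theta|k)=\frac12\log\frac{1+\mathrm{sn}(\theta|k)}{\mathrm{cn}(\theta|k)}$ with $\theta=\frac{2K(k)}{\pi}\bar\theta$, $K(k)=\int_0^{\pi/2}(1-k^2\sin^2t)^{-1/2}dt$, and $\mathrm{sn},\mathrm{cn}$ the Jacobi elliptic functions of modulus $k$ (equivalently $\sinh(2J(\bar\theta|k))=\mathrm{sc}(\theta|k)$). In the isoradial dual $G^*$, the dual edge $e^*$ of an edge $e$ with rhombus half-angle $\bar\theta_e$ has rhombus half-angle $\frac\pi2-\bar\theta_e$. Polygon configurations are edge subsets with even degree at every vertex; the high-temperature expansion weights a polygon configuration by $\prod_{e}\tanh J_e$, the low-temperature expansion of the dual model (via domain walls) by $\prod_{e}e^{-2J_{e^*}}$. *)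

(* Defs.v *)
From Stdlib Require Import Reals ClassicalEpsilon.
From mathcomp Require Import all_boot.

Set Implicit Arguments.
Unset Strict Implicit.
Unset Printing Implicit Defensive.

Local Open Scope R_scope.

(** Jacobi elliptic functions, parameterized by the PARAMETER m = k^2
    (a real number m < 1; for the imaginary modulus kstar = i k / k' one has
    m = kstar^2 = - k^2 / (1 - k^2) <= 0, and sn, cn, K are real). *)

Definition ell_integrand (m : R) (t : R) : R := / sqrt (1 - m * (sin t)^2).

Definition EllF (m phi : R) : R :=
  epsilon (inhabits (0 : R))
    (fun v : R => exists pr : Riemann_integrable (ell_integrand m) (0 : R) phi,
                RiemannInt pr = v).

Definition EllK (m : R) : R := EllF m (PI / 2).

Definition JacobiAm (m u : R) : R :=
  epsilon (inhabits (0 : R)) (fun phi : R => EllF m phi = u).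

Definition JacobiSn (m u : R) : R := sin (JacobiAm m u).
Definition JacobiCn (m u : R) : R := cos (JacobiAm m u).

Definition Jcoupling (thetabar m : R) : R :=
  let theta := 2 * EllK m / PI * thetabar in
  / 2 * ln ((1 + JacobiSn m theta) / JacobiCn m theta).

Definition degree_in (V E : finType) (ends : E -> V * V) (S : {set E}) (v : V) : nat :=
  (#|[set e in S | (ends e).1 == v]| + #|[set e in S | (ends e).2 == v]|)%N.

Definition polygon_config (V E : finType) (ends : E -> V * V) (S : {set E}) : bool :=
  [forall v : V, ~~ odd (degree_in ends S v)].

Definition ht_weight (E : finType) (theta : E -> R) (m : R) (S : {set E}) : R :=
  \big[Rmult/1]_(e in S) tanh (Jcoupling (theta e) m).

(* low-temperature weight of S for the dual model with parameter m:
   prod_{e in S} exp (-2 J_{e*}), with dual half-angle pi/2 - theta_e *)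
Definition lt_dual_weight (E : finType) (theta : E -> R) (m : R) (S : {set E}) : R :=
  \big[Rmult/1]_(e in S) exp (-2 * Jcoupling (PI / 2 - theta e) m).

Definition polygon_measure (V E : finType) (ends : E -> V * V)
    (w : {set E} -> R) (S : {set E}) : R :=
  w S / \big[Rplus/0]_(T : {set E} | polygon_config ends T) w T.

(* Main.v *)
Require Import Defs.
From Stdlib Require Import Reals.
From Stdlib Require Import ClassicalEpsilon Lra FunctionalExtensionality.
From Coquelicot Require Import Coquelicot.

Local Open Scope R_scope.
Lemma pos_den m t : m < 1 -> 0 < 1 - m * sin t ^ 2.
Proof.
  intro Hm. pose proof (pow2_ge_0 (sin t)).
  assert (sin t ^ 2 <= 1).
  { pose proof (SIN_bound t). nra. }
  destruct (Rle_lt_dec (sin t ^ 2) 0).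
  - assert (sin t ^ 2 = 0) by lra. rewrite H1; lra.
  - assert (0 < sin t ^ 2 * (1 - m)) by (apply Rmult_lt_0_compat; lra). lra.
Qed.

Lemma integ_pos m t : m < 1 -> 0 < ell_integrand m t.
Proof.
  intro Hm. unfold ell_integrand. apply Rinv_0_lt_compat, sqrt_lt_R0, pos_den, Hm.
Qed.

Lemma integ_cont m t : m < 1 -> continuous (ell_integrand m) t.
Proof.
  intro Hm. apply (@ex_derive_continuous R_AbsRing R_NormedModule). unfold ell_integrand.
  auto_derive. split. apply pos_den, Hm. split; auto.
  apply Rgt_not_eq, sqrt_lt_R0, pos_den, Hm.
Qed.

Lemma integ_ex m a b : m < 1 -> ex_RInt (ell_integrand m) a b.
Proof. intro Hm. apply (@ex_RInt_continuous R_CompleteNormedModule). intros; apply integ_cont, Hm. Qed.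

Lemma EllF_eq m phi : m < 1 -> EllF m phi = RInt (ell_integrand m) 0 phi.
Proof.
  intro Hm. unfold EllF.
  set (P := fun v : R => exists pr : Riemann_integrable (ell_integrand m) 0 phi, RiemannInt pr = v).
  assert (HP : P (epsilon (inhabits 0) P)).
  { apply epsilon_spec. exists (RiemannInt (ex_RInt_Reals_0 _ _ _ (integ_ex m 0 phi Hm))).
    eexists; reflexivity. }
  destruct HP as [pr Hpr]. rewrite <- Hpr. symmetry. apply RInt_Reals.
Qed.

Lemma F_diff m a b : m < 1 ->
  RInt (ell_integrand m) 0 b - RInt (ell_integrand m) 0 a = RInt (ell_integrand m) a b.
Proof.
  intro Hm. rewrite <- (RInt_Chasles _ 0 a b) by apply integ_ex, Hm.
  unfold plus; simpl. ring.
Qed.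

Lemma F_strict m a b : m < 1 -> a < b -> EllF m a < EllF m b.
Proof.
  intros Hm Hab. rewrite !EllF_eq by exact Hm.
  assert (0 < RInt (ell_integrand m) a b).
  { apply RInt_gt_0; auto. intros; apply integ_pos, Hm. intros; apply integ_cont, Hm. }
  rewrite <- F_diff in H by exact Hm. lra.
Qed.

Lemma F_inj m a b : m < 1 -> EllF m a = EllF m b -> a = b.
Proof.
  intros Hm H. destruct (Rtotal_order a b) as [h|[h|h]]; auto.
  apply (F_strict m) in h; auto; lra.
  apply (F_strict m) in h; auto; lra.
Qed.

Lemma F_cont m : m < 1 -> continuity (EllF m).
Proof.
  intros Hm x. apply continuity_pt_ext with (f := fun y => RInt (ell_integrand m) 0 y).
  intro; rewrite EllF_eq; auto.
  apply continuity_pt_filterlim. apply (@ex_derive_continuous R_AbsRing R_NormedModule).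
  eexists. apply is_derive_RInt with (a := 0).
  apply filter_forall. intro y. apply (@RInt_correct R_CompleteNormedModule), integ_ex, Hm.
  apply integ_cont, Hm.
Qed.

Lemma F0 m : m < 1 -> EllF m 0 = 0.
Proof. intro Hm. rewrite EllF_eq, RInt_point; auto. Qed.

Lemma am_spec m u : m < 1 -> 0 < u < EllK m ->
  0 < JacobiAm m u < PI / 2 /\ EllF m (JacobiAm m u) = u.
Proof.
  intros Hm Hu. unfold EllK in Hu.
  assert (Hex : exists phi, EllF m phi = u).
  { destruct (IVT (fun x => EllF m x - u) 0 (PI/2)) as [z [_ Hz]].
    - apply continuity_minus. apply F_cont, Hm. apply continuity_const. intros ??; auto.
    - pose proof PI_RGT_0; lra.
    - rewrite F0; lra.
    - lra.
    - exists z; lra. }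
  pose proof (epsilon_spec (inhabits 0) (fun phi => EllF m phi = u) Hex) as Hs.
  fold (JacobiAm m u) in Hs. split; auto.
  split.
  - destruct (Rlt_le_dec 0 (JacobiAm m u)); auto.
    destruct r. apply (F_strict m) in H; auto. rewrite F0 in H; lra.
    rewrite H, F0 in Hs; lra.
  - destruct (Rlt_le_dec (JacobiAm m u) (PI/2)); auto.
    destruct r. apply (F_strict m) in H; auto. lra. rewrite <- H in Hs; lra.
Qed.
Lemma integ_dual k s : 0 <= k < 1 ->
  ell_integrand (- k ^ 2 / (1 - k ^ 2)) (PI / 2 - s) = sqrt (1 - k ^ 2) * ell_integrand (k ^ 2) s.
Proof.
  intro Hk. unfold ell_integrand. rewrite sin_shift.
  assert (Hb : 0 < 1 - k ^ 2) by nra.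
  assert (Ha : 0 < 1 - k ^ 2 * sin s ^ 2) by (apply pos_den; nra).
  replace (1 - - k ^ 2 / (1 - k ^ 2) * cos s ^ 2) with ((1 - k ^ 2 * sin s ^ 2) / (1 - k ^ 2)).
  2:{ pose proof (sin2_cos2 s). unfold Rsqr in H. field_simplify; try lra.
      replace (cos s ^ 2) with (1 - sin s ^ 2) by nra. field; lra. }
  rewrite sqrt_div_alt by exact Hb.
  assert (0 < sqrt (1 - k^2 * sin s ^ 2)) by (apply sqrt_lt_R0; lra).
  assert (0 < sqrt (1 - k^2)) by (apply sqrt_lt_R0; lra).
  field; lra.
Qed.

Lemma sub_lemma k a : 0 <= k < 1 ->
  RInt (ell_integrand (- k ^ 2 / (1 - k ^ 2))) 0 (PI / 2 - a)
  = sqrt (1 - k ^ 2) * RInt (ell_integrand (k ^ 2)) a (PI / 2).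
Proof.
  intro Hk.
  assert (Hms : - k ^ 2 / (1 - k ^ 2) < 1).
  { assert (0 < 1 - k^2) by nra. assert (0 <= k^2/(1-k^2)) by (apply Rdiv_le_0_compat; nra).
    unfold Rdiv in *. lra. }
  assert (Hm : k ^ 2 < 1) by nra.
  pose proof (RInt_comp_lin (ell_integrand (- k ^ 2 / (1 - k ^ 2))) (-1) (PI/2) a (PI/2)
     (integ_ex _ _ _ Hms)) as H.
  replace (-1 * (PI/2) + PI/2) with 0 in H by ring.
  replace (-1 * a + PI/2) with (PI/2 - a) in H by ring.
  rewrite <- (opp_RInt_swap _ 0) in H by apply integ_ex, Hms.
  change (sqrt (1-k^2) * RInt (ell_integrand (k^2)) a (PI/2)) with (scal (sqrt (1-k^2)) (RInt (ell_integrand (k^2)) a (PI/2))).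
  rewrite <- RInt_scal by apply integ_ex, Hm.
  assert (RInt (fun y => scal (-1) (ell_integrand (- k ^ 2 / (1 - k ^ 2)) (-1 * y + PI / 2))) a (PI / 2)
    = opp (RInt (fun x => scal (sqrt (1 - k ^ 2)) (ell_integrand (k ^ 2) x)) a (PI / 2))).
  { rewrite <- RInt_opp.
    - apply RInt_ext. intros x _. replace (-1 * x + PI/2) with (PI/2 - x) by ring.
      rewrite integ_dual by exact Hk. unfold scal, opp; simpl; unfold mult; simpl. ring.
    - apply (@ex_RInt_scal R_CompleteNormedModule), integ_ex, Hm. }
  assert (E := eq_trans (eq_sym H) H0).
  assert (E2 : forall x y : R, opp x = opp y -> x = y) by (intros x y h; unfold opp in h; simpl in h; lra).
  apply E2. exact E.
Qed.
Lemma key k tb : 0 <= k < 1 -> 0 < tb < PI / 2 ->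
  0 < JacobiAm (k ^ 2) (2 * EllK (k ^ 2) / PI * tb) < PI / 2 /\
  JacobiAm (- k ^ 2 / (1 - k ^ 2)) (2 * EllK (- k ^ 2 / (1 - k ^ 2)) / PI * (PI / 2 - tb))
  = PI / 2 - JacobiAm (k ^ 2) (2 * EllK (k ^ 2) / PI * tb).
Proof.
  intros Hk Htb.
  assert (Hms : - k ^ 2 / (1 - k ^ 2) < 1).
  { assert (0 < 1 - k^2) by nra. assert (0 <= k^2/(1-k^2)) by (apply Rdiv_le_0_compat; nra).
    unfold Rdiv in *. lra. }
  assert (Hm : k ^ 2 < 1) by nra.
  pose proof PI_RGT_0 as Hpi.
  set (K := EllK (k ^ 2)).
  assert (HK : 0 < K).
  { unfold K, EllK. rewrite <- (F0 (k^2)) by exact Hm. apply F_strict; lra. }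
  set (u := 2 * K / PI * tb).
  assert (Hu : 0 < u < K).
  { unfold u. split.
    - apply Rmult_lt_0_compat; [apply Rdiv_lt_0_compat; lra | lra].
    - assert (2 * K / PI * tb < 2 * K / PI * (PI / 2)).
      { apply Rmult_lt_compat_l; [apply Rdiv_lt_0_compat; lra | lra]. }
      assert (2 * K / PI * (PI / 2) = K) by (field; lra). lra. }
  destruct (am_spec (k^2) u Hm Hu) as [Hphi HF].
  set (phi := JacobiAm (k ^ 2) u) in *.
  split; auto.
  set (kp := sqrt (1 - k ^ 2)).
  assert (HKs : EllK (- k ^ 2 / (1 - k ^ 2)) = kp * K).
  { unfold K, EllK. rewrite !EllF_eq by assumption.
    replace (PI/2) with (PI/2 - 0) at 1 by ring. rewrite sub_lemma by assumption.
    reflexivity. }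
  assert (HFs : EllF (- k ^ 2 / (1 - k ^ 2)) (PI / 2 - phi)
                = 2 * EllK (- k ^ 2 / (1 - k ^ 2)) / PI * (PI / 2 - tb)).
  { rewrite HKs. rewrite EllF_eq by assumption. rewrite sub_lemma by assumption.
    fold kp. rewrite <- F_diff by assumption. rewrite <- !EllF_eq by assumption.
    rewrite HF. fold (EllK (k^2)). fold K. unfold u. field. lra. }
  set (P := fun p => EllF (- k ^ 2 / (1 - k ^ 2)) p = 2 * EllK (- k ^ 2 / (1 - k ^ 2)) / PI * (PI / 2 - tb)).
  assert (HP := epsilon_spec (inhabits 0) P (ex_intro _ _ HFs)).
  apply (F_inj _ _ _ Hms). unfold JacobiAm. fold P. rewrite HP, HFs. reflexivity.
Qed.

Lemma sinh_ln x : 0 < x -> sinh (2 * (/ 2 * ln x)) = (x - / x) / 2.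
Proof.
  intro Hx. replace (2 * (/2 * ln x)) with (ln x) by field.
  unfold sinh. rewrite exp_Ropp, exp_ln; auto.
Qed.

Lemma tanh_alt z : tanh z = (exp (2 * z) - 1) / (exp (2 * z) + 1).
Proof.
  unfold tanh, sinh, cosh. replace (2 * z) with (z + z) by ring.
  rewrite exp_plus, exp_Ropp. pose proof (exp_pos z). field. nra.
Qed.

Lemma exp_m2 x : 0 < x -> exp (-2 * (/ 2 * ln x)) = / x.
Proof.
  intro Hx. replace (-2 * (/2 * ln x)) with (- ln x) by field.
  rewrite exp_Ropp, exp_ln; auto.
Qed.

Lemma tanh_half x : 0 < x -> tanh (/ 2 * ln x) = (x - 1) / (x + 1).
Proof.
  intro Hx. rewrite tanh_alt. replace (2 * (/2 * ln x)) with (ln x) by field.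
  rewrite exp_ln; auto.
Qed.

Lemma Jform tb m : Jcoupling tb m =
  / 2 * ln ((1 + sin (JacobiAm m (2 * EllK m / PI * tb))) / cos (JacobiAm m (2 * EllK m / PI * tb))).
Proof. reflexivity. Qed.

Lemma part1 k tb : 0 <= k < 1 -> 0 < tb < PI / 2 ->
  sinh (2 * Jcoupling tb (k ^ 2)) *
  sinh (2 * Jcoupling (PI / 2 - tb) (- k ^ 2 / (1 - k ^ 2))) = 1
  /\ tanh (Jcoupling tb (k ^ 2)) = exp (-2 * Jcoupling (PI / 2 - tb) (- k ^ 2 / (1 - k ^ 2))).
Proof.
  intros Hk Htb. destruct (key k tb Hk Htb) as [Hphi Hs].
  rewrite !Jform. rewrite Hs. rewrite sin_shift, cos_shift.
  set (phi := JacobiAm (k ^ 2) (2 * EllK (k ^ 2) / PI * tb)) in *.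
  assert (s0 : 0 < sin phi) by (apply sin_gt_0; lra).
  assert (c0 : 0 < cos phi) by (apply cos_gt_0; lra).
  pose proof (sin2_cos2 phi) as E. unfold Rsqr in E.
  assert (x0 : 0 < (1 + sin phi) / cos phi) by (apply Rdiv_lt_0_compat; lra).
  assert (y0 : 0 < (1 + cos phi) / sin phi) by (apply Rdiv_lt_0_compat; lra).
  rewrite !sinh_ln, tanh_half, exp_m2 by assumption.
  assert (C2 : cos phi ^ 2 = 1 - sin phi ^ 2) by nra.
  assert (Z : (sin phi ^ 2 + cos phi ^ 2 - 1) * (sin phi ^ 2 + cos phi ^ 2 + 1 + 2 * sin phi + 2 * cos phi) = 0).
  { replace (sin phi ^ 2 + cos phi ^ 2 - 1) with 0 by nra. ring. }
  split; field_simplify_eq; try (repeat split; lra); try lra; nra.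
Qed.

From mathcomp Require Import all_boot.

Theorem mainTheorem11 :
  forall k : R, 0 <= k -> k < 1 ->
    (forall thetabar : R, 0 < thetabar -> thetabar < PI / 2 ->
       sinh (2 * Jcoupling thetabar (k ^ 2)) *
       sinh (2 * Jcoupling (PI / 2 - thetabar) (- k ^ 2 / (1 - k ^ 2))) = 1)
    /\
    (forall (V E : finType) (ends : E -> V * V) (theta : E -> R),
       (forall e, 0 < theta e /\ theta e < PI / 2) ->
       forall S : {set E}, polygon_config ends S ->
         polygon_measure ends (ht_weight theta (k ^ 2)) S =
         polygon_measure ends (lt_dual_weight theta (- k ^ 2 / (1 - k ^ 2))) S).
Proof.
  move=> k Hk0 Hk1; split.
  - move=> tb H1 H2. by case: (part1 k tb (conj Hk0 Hk1) (conj H1 H2)).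
  - move=> V E ends theta Ht S _.
    have -> : ht_weight theta (k ^ 2) = lt_dual_weight theta (- k ^ 2 / (1 - k ^ 2)).
      apply: functional_extensionality => T.
      rewrite /ht_weight /lt_dual_weight.
      apply: eq_bigr => e _.
      by case: (part1 k (theta e) (conj Hk0 Hk1) (Ht e)).
    by [].
Qed.
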